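(* Let $A$ be a synaptic algebra and $p,q\in P$. Define $r_p:=p\wedge(p^{\perp}\vee q)\wedge(p^{\perp}\vee q^{\perp})$, $r_{p^{\perp}}:=p^{\perp}\wedge(p\vee q)\wedge(p\vee q^{\perp})$, $r_q:=q\wedge(p\vee q^{\perp})\wedge(p^{\perp}\vee q^{\perp})$, $r_{q^{\perp}}:=q^{\perp}\wedge(p\vee q)\wedge(p^{\perp}\vee q)$, and $[p,q]:=(p\vee q)\wedge(p\vee q^{\perp})\wedge(p^{\perp}\vee q)\wedge(p^{\perp}\vee q^{\perp})$. The following conditions are mutually equivalent: (i) at least one of $r_p=0$, $r_{p^{\perp}}=0$, $r_q=0$, $r_{q^{\perp}}=0$ holds; (ii) $r_p=r_{p^{\perp}}=r_q=r_{q^{\perp}}=0$; (iii) at least one of $pCq$, $pCq^{\perp}$, $p^{\perp}Cq$, $p^{\perp}Cq^{\perp}$ holds; (iv) $pCq$, $pCq^{\perp}$, $p^{\perp}Cq$ and $p^{\perp}Cq^{\perp}$ all hold; (v) $[p,q]=0$.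
   Context: Synaptic algebra (Foulis): $R$ is a real linear associative algebra with unit $1$, and $A\subseteq R$ is a real linear subspace with $1\in A$. For $a,b\in A$ write $aCb$ iff $ab=ba$; $C(a):=\{b\in A: aCb\}$; $CC(a):=\{b\in A: bCd \text{ for all } d\in C(a)\}$. $A$ is a synaptic algebra with enveloping algebra $R$ iff: (SA1) $A$ is a partially ordered archimedean real linear space with positive cone $A^+$, $1$ is an order unit, $\|\cdot\|$ the order-unit norm; (SA2) $a\in A\Rightarrow a^2\in A^+$; (SA3) $a,b\in A^+\Rightarrow aba\in A^+$; (SA4) if $a\in A$, $b\in A^+$, $aba=0$ then $ab=ba=0$; (SA5) if $a\in A^+$ there is $b\in A^+\cap CC(a)$ with $b^2=a$; (SA6) for $a\in A$ there is $p=p^2\in A$ with $ab=0\Leftrightarrow pb=0$ for all $b\in A$; (SA7) if $1\le a$ there is $b\in A$ with $ab=ba=1$; (SA8) if $a,b\in A$, $a_1\le a_2\le\cdots$ are pairwise commuting elements of $C(b)$ with $\|a-a_n\|\to0$, then $a\in C(b)$. $A$ is nondegenerate. $P:=\{p\in A:p=p^2\}$ with the order inherited from $A$ is an orthomodular lattice with orthocomplement $p^{\perp}:=1-p$, meet $\wedge$, join $\vee$. *)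

(* Defs.v *)
From HB Require Import structures.
From mathcomp Require Import all_boot all_order all_algebra.
From mathcomp Require Import all_classical all_reals all_analysis.
Set Implicit Arguments. Unset Strict Implicit. Unset Printing Implicit Defensive.
Import Order.TTheory GRing.Theory Num.Theory.
Import numFieldNormedType.Exports.
Local Open Scope classical_set_scope.
Local Open Scope ring_scope.

Section Synaptic.
Variables (R : realType) (E : algType R).
(* A : the synaptic algebra (a subset of the enveloping algebra E);
   Apos : its positive cone A^+. *)
Variables (A Apos : set E).

Definition sle (a b : E) : Prop := Apos (b - a).

Definition commutes (a b : E) : Prop := a * b = b * a.

Definition Cset (a : E) : set E := [set b | A b /\ commutes a b].
Definition CCset (a : E) : set E :=
  [set b | A b /\ forall d, Cset a d -> commutes b d].

Definition ounorm (a : E) : R :=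
  inf [set l : R | 0 < l /\ sle (- (l *: 1)) a /\ sle a (l *: 1)].

Record synaptic_algebra : Prop := {
  sa_sub0 : A 0;
  sa_subD : forall a b, A a -> A b -> A (a + b);
  sa_subZ : forall (k : R) a, A a -> A (k *: a);
  sa_sub1 : A 1;
  sa_pos_sub : forall a, Apos a -> A a;
  sa_pos0 : Apos 0;
  sa_posD : forall a b, Apos a -> Apos b -> Apos (a + b);
  sa_posZ : forall (k : R) a, 0 <= k -> Apos a -> Apos (k *: a);
  sa_pos_anti : forall a, Apos a -> Apos (- a) -> a = 0;
  sa_archi : forall a b, A a -> A b ->
      (forall n : nat, sle (n%:R *: a) b) -> sle a 0;
  sa_unit : forall a, A a -> exists n : nat, sle a (n%:R *: 1);
  sa2 : forall a, A a -> Apos (a * a);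
  sa3 : forall a b, Apos a -> Apos b -> Apos (a * b * a);
  sa4 : forall a b, A a -> Apos b -> a * b * a = 0 -> a * b = 0 /\ b * a = 0;
  sa5 : forall a, Apos a -> exists b, Apos b /\ CCset a b /\ b * b = a;
  sa6 : forall a, A a -> exists p, A p /\ p * p = p /\
      forall b, A b -> (a * b = 0 <-> p * b = 0);
  sa7 : forall a, A a -> sle 1 a -> exists b, A b /\ a * b = 1 /\ b * a = 1;
  sa8 : forall a b (s : nat -> E), A a -> A b ->
      (forall n, Cset b (s n)) ->
      (forall n, sle (s n) (s n.+1)) ->
      (forall m n, commutes (s m) (s n)) ->
      (ounorm (a - s n)) @[n --> \oo] --> (0 : R) ->
      Cset b a;
  sa_nondeg : (1 : E) != 0
}.

Definition is_proj (p : E) : Prop := A p /\ p = p * p.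

Definition pcompl (p : E) : E := 1 - p.

Definition is_pmeet (p q r : E) : Prop :=
  is_proj r /\ sle r p /\ sle r q /\
  forall s, is_proj s -> sle s p -> sle s q -> sle s r.
Definition is_pjoin (p q r : E) : Prop :=
  is_proj r /\ sle p r /\ sle q r /\
  forall s, is_proj s -> sle p s -> sle q s -> sle r s.

Definition pmeet (p q : E) : E := xget 0 (is_pmeet p q).
Definition pjoin (p q : E) : E := xget 0 (is_pjoin p q).

End Synaptic.

(* Main.v *)
Require Import Defs.
From HB Require Import structures.
From mathcomp Require Import all_boot all_order all_algebra.
From mathcomp Require Import all_classical all_reals all_analysis.
Import Order.TTheory GRing.Theory Num.Theory.
Local Open Scope ring_scope.
Set Implicit Arguments. Unset Strict Implicit.

Section Syn.
Variables (R : realType) (E : algType R) (A Apos : set E).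
Hypothesis HS : synaptic_algebra A Apos.

Local Notation proj := (is_proj A).
Local Notation le := (sle Apos).

Lemma A_opp a : A a -> A (- a).
Proof. by move=> Ha; rewrite -scaleN1r; apply: (sa_subZ HS). Qed.

Lemma A_sub a b : A a -> A b -> A (a - b).
Proof. by move=> Ha Hb; apply: (sa_subD HS) => //; apply: A_opp. Qed.

Lemma pos_anti a : Apos a -> Apos (- a) -> a = 0.
Proof. exact: (sa_pos_anti HS). Qed.

Lemma le_anti a b : le a b -> le b a -> a = b.
Proof.
rewrite /sle => H1 H2; apply/eqP; rewrite -subr_eq0; apply/eqP.
by apply: pos_anti => //; rewrite opprB.
Qed.

Lemma le_trans a b c : le a b -> le b c -> le a c.
Proof.
rewrite /sle => H1 H2.
have -> : c - a = (c - b) + (b - a) by rewrite addrA subrK.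
exact: (sa_posD HS).
Qed.

Lemma le_refl a : le a a.
Proof. by rewrite /sle subrr; apply: (sa_pos0 HS). Qed.

Lemma compl_diff (o a b : E) : (o - a) - (o - b) = b - a.
Proof. by rewrite opprB addrC addrA subrK addrC. Qed.

Lemma le_compl a b : le a b -> le (1 - b) (1 - a).
Proof. by rewrite /sle compl_diff. Qed.

Lemma le_compl' a b : le (1 - b) (1 - a) -> le a b.
Proof. by rewrite /sle compl_diff. Qed.

Lemma pos_sum0 x y : Apos x -> Apos y -> x + y = 0 -> x = 0.
Proof.
move=> Hx Hy Hxy; apply: pos_anti => //.
by have -> : - x = y by apply/eqP; rewrite eq_sym -subr_eq0 opprK addrC Hxy.
Qed.

Lemma projA p : proj p -> A p.
Proof. by case. Qed.

Lemma projI p : proj p -> p * p = p.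
Proof. by move=> [_ H]; rewrite -H. Qed.

Lemma proj_pos p : proj p -> Apos p.
Proof. by case=> Ha Hp; rewrite Hp; apply: (sa2 HS). Qed.

Lemma proj_compl p : proj p -> proj (1 - p).
Proof.
move=> Hp; split; first by apply: A_sub => //; [apply: (sa_sub1 HS) | apply: projA].
by rewrite mulrBl !mulrBr !mul1r mulr1 projI // subrr subr0.
Qed.

Lemma compl_invol (p : E) : 1 - (1 - p) = p.
Proof. by rewrite opprB addrC subrK. Qed.

Lemma annih_lr a e : A a -> proj e -> e * a = 0 -> a * e = 0.
Proof.
move=> Ha He H.
have : a * e * a = 0 by rewrite -(projI He) !mulrA -(mulrA (a * e)) H mulr0.
by case/(sa4 HS Ha (proj_pos He)).
Qed.

Lemma annih_rl a e : A a -> proj e -> a * e = 0 -> e * a = 0.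
Proof.
move=> Ha He H.
have : a * e * a = 0 by rewrite H mul0r.
by case/(sa4 HS Ha (proj_pos He)).
Qed.

Lemma le_proj e f : proj e -> proj f -> le e f -> e * f = e /\ f * e = e.
Proof.
move=> He Hf Hle.
set g := 1 - f.
have Hg : proj g by apply: proj_compl.
have gf : g * f = 0 by rewrite /g mulrBl mul1r projI // subrr.
have fg : f * g = 0 by rewrite /g mulrBr mulr1 projI // subrr.
have H1 : Apos (g * (f - e) * g) by apply: (sa3 HS) => //; apply: proj_pos.
have E1 : g * (f - e) * g = - (g * e * g) by rewrite [g * (f - e)]mulrBr gf sub0r !mulNr.
have H2 : Apos (g * e * g) by apply: (sa3 HS); apply: proj_pos.
have H0 : g * e * g = 0 by apply: pos_anti => //; rewrite -E1.
have [ge eg] := sa4 HS (projA Hg) (proj_pos He) H0.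
move: ge eg; rewrite /g mulrBl mulrBr mul1r mulr1 => ge eg.
split; apply/eqP; rewrite eq_sym -subr_eq0; apply/eqP => //.
Qed.

Lemma proj_le e f : proj e -> proj f -> e * f = e -> le e f.
Proof.
move=> He Hf H.
have Hg := proj_compl Hf.
have H1 : e * (1 - f) = 0 by rewrite mulrBr mulr1 H subrr.
have H2 := annih_rl (projA He) Hg H1.
move: H2; rewrite mulrBl mul1r => /eqP; rewrite subr_eq0 => /eqP H2.
rewrite /sle.
have -> : f - e = (f - e) * (f - e).
  by rewrite mulrBl !mulrBr (projI He) (projI Hf) H -H2 subrr subr0.
by apply: (sa2 HS); apply: A_sub; apply: projA.
Qed.

Lemma le_proj_iff e f : proj e -> proj f -> le e f <-> e * f = e.
Proof.
move=> He Hf; split; first by case/(le_proj He Hf).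
exact: proj_le.
Qed.


Lemma mulC0 (x y : E) : x * (1 - y) = 0 -> x * y = x.
Proof. by rewrite mulrBr mulr1 => /eqP; rewrite subr_eq0 => /eqP <-. Qed.

Lemma mulC0' (x y : E) : x * y = x -> x * (1 - y) = 0.
Proof. by rewrite mulrBr mulr1 => ->; rewrite subrr. Qed.

Lemma C0mul (x y : E) : (1 - y) * x = 0 -> y * x = x.
Proof. by rewrite mulrBl mul1r => /eqP; rewrite subr_eq0 => /eqP <-. Qed.

Lemma join_exists p q : proj p -> proj q -> exists r, is_pjoin A Apos p q r.
Proof.
move=> Hp Hq.
have Apq : A (p + q) by apply: (sa_subD HS); apply: projA.
have [r [Ar [rr Hr]]] := sa6 HS Apq.
have Hrp : proj r by split => //; rewrite rr.
have Hg := proj_compl Hrp.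
have H1 : (p + q) * (1 - r) = 0.
  by apply/(Hr _ (projA Hg)); apply: mulC0'.
have H2 : (1 - r) * p * (1 - r) + (1 - r) * q * (1 - r) = 0.
  by rewrite -mulrDl -mulrDr -mulrA H1 mulr0.
have Pp : Apos ((1 - r) * p * (1 - r)) by apply: (sa3 HS); apply: proj_pos.
have Pq : Apos ((1 - r) * q * (1 - r)) by apply: (sa3 HS); apply: proj_pos.
have Zp := pos_sum0 Pp Pq H2.
have Zq : (1 - r) * q * (1 - r) = 0 by apply: pos_sum0 Pq Pp _; rewrite addrC.
have [_ Zp'] := sa4 HS (projA Hg) (proj_pos Hp) Zp.
have [_ Zq'] := sa4 HS (projA Hg) (proj_pos Hq) Zq.
exists r; split=> //; split; first by apply: proj_le => //; apply: mulC0.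
split; first by apply: proj_le => //; apply: mulC0.
move=> s Hs Hps Hqs.
have [ps _] := le_proj Hp Hs Hps.
have [qs _] := le_proj Hq Hs Hqs.
have : (p + q) * (1 - s) = 0 by rewrite mulrDl !mulC0' // addr0.
move/(Hr _ (projA (proj_compl Hs))) => Hrs.
by apply: proj_le => //; apply: mulC0.
Qed.

Lemma join_spec p q : proj p -> proj q -> is_pjoin A Apos p q (pjoin A Apos p q).
Proof. by move=> Hp Hq; apply: xgetPex; apply: join_exists. Qed.

Lemma meet_exists p q : proj p -> proj q -> exists r, is_pmeet A Apos p q r.
Proof.
move=> Hp Hq.
have [Hj [H1 [H2 H3]]] := join_spec (proj_compl Hp) (proj_compl Hq).
exists (1 - pjoin A Apos (1 - p) (1 - q)); split; first exact: proj_compl.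
split; first by apply: le_compl'; rewrite compl_invol.
split; first by apply: le_compl'; rewrite compl_invol.
move=> s Hs Hsp Hsq.
apply: le_compl'; rewrite compl_invol; apply: H3; first exact: proj_compl.
  exact: le_compl.
exact: le_compl.
Qed.

Lemma meet_spec p q : proj p -> proj q -> is_pmeet A Apos p q (pmeet A Apos p q).
Proof. by move=> Hp Hq; apply: xgetPex; apply: meet_exists. Qed.

Lemma meet_unique p q x : is_pmeet A Apos p q x -> pmeet A Apos p q = x.
Proof.
move=> Hx; apply: xget_unique => // y Hy.
case: Hx => [Px [xp [xq Mx]]]; case: Hy => [Py [yp [yq My]]].
by apply: le_anti; [apply: Mx | apply: My].
Qed.

Lemma join_unique p q x : is_pjoin A Apos p q x -> pjoin A Apos p q = x.
Proof.
move=> Hx; apply: xget_unique => // y Hy.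
case: Hx => [Px [xp [xq Mx]]]; case: Hy => [Py [yp [yq My]]].
by apply: le_anti; [apply: My | apply: Mx].
Qed.

Lemma meet_proj p q : proj p -> proj q -> proj (pmeet A Apos p q).
Proof. by move=> Hp Hq; case: (meet_spec Hp Hq). Qed.

Lemma join_proj p q : proj p -> proj q -> proj (pjoin A Apos p q).
Proof. by move=> Hp Hq; case: (join_spec Hp Hq). Qed.

Lemma meet_l p q : proj p -> proj q -> le (pmeet A Apos p q) p.
Proof. by move=> Hp Hq; case: (meet_spec Hp Hq) => _ []. Qed.

Lemma meet_r p q : proj p -> proj q -> le (pmeet A Apos p q) q.
Proof. by move=> Hp Hq; case: (meet_spec Hp Hq) => _ [_ []]. Qed.

Lemma meet_glb p q s : proj p -> proj q -> proj s -> le s p -> le s q ->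
  le s (pmeet A Apos p q).
Proof. by move=> Hp Hq Hs; case: (meet_spec Hp Hq) => _ [_ [_]]; apply. Qed.

Lemma join_l p q : proj p -> proj q -> le p (pjoin A Apos p q).
Proof. by move=> Hp Hq; case: (join_spec Hp Hq) => _ []. Qed.

Lemma join_demorgan p q : proj p -> proj q ->
  pjoin A Apos p q = 1 - pmeet A Apos (1 - p) (1 - q).
Proof.
move=> Hp Hq; apply: join_unique.
have Hp' := proj_compl Hp; have Hq' := proj_compl Hq.
have [Pm [m1 [m2 m3]]] := meet_spec Hp' Hq'.
split; first exact: proj_compl.
split; first by apply: le_compl'; rewrite compl_invol.
split; first by apply: le_compl'; rewrite compl_invol.
move=> s Hs Hps Hqs.
apply: le_compl'; rewrite compl_invol; apply: m3; first exact: proj_compl.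
  exact: le_compl.
exact: le_compl.
Qed.

Lemma meet_comm p q : proj p -> proj q -> pmeet A Apos p q = pmeet A Apos q p.
Proof.
move=> Hp Hq; apply: meet_unique.
have [Pm [m1 [m2 m3]]] := meet_spec Hq Hp.
do 3!split => //.
by move=> s Hs H1 H2; apply: m3.
Qed.

Lemma join_comm p q : proj p -> proj q -> pjoin A Apos p q = pjoin A Apos q p.
Proof.
move=> Hp Hq; apply: join_unique.
have [Pm [m1 [m2 m3]]] := join_spec Hq Hp.
do 3!split => //.
by move=> s Hs H1 H2; apply: m3.
Qed.

Lemma sq_comm (a b : E) : a * b = b * a -> (a + b) * (a + b) - a * a - b * b = (a * b) *+ 2.
Proof. move=> C.
have -> : (a + b) * (a + b) = a * a + b * b + (a * b) *+ 2.
  by rewrite mulrDl !mulrDr -C mulr2n [a * b + b * b]addrC addrACA.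
by apply/eqP; rewrite !subr_eq; apply/eqP; rewrite [LHS]addrC -[RHS]addrA (addrC (b * b)).
Qed.

Lemma half (x : E) : x = (2%:R^-1 : R) *: (x *+ 2).
Proof. by rewrite -[x *+ 2]scaler_nat scalerA mulVf ?scale1r // pnatr_eq0. Qed.

Lemma A_mul_comm a b : A a -> A b -> a * b = b * a -> A (a * b).
Proof.
move=> Ha Hb C; rewrite (half (a * b)) -sq_comm //.
apply: (sa_subZ HS); apply: A_sub; [apply: A_sub|].
- by apply: (sa_pos_sub HS); apply: (sa2 HS); apply: (sa_subD HS).
- by apply: (sa_pos_sub HS); apply: (sa2 HS).
- by apply: (sa_pos_sub HS); apply: (sa2 HS).
Qed.

Lemma proj_mul e f : proj e -> proj f -> e * f = f * e -> proj (e * f).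
Proof.
move=> He Hf C; split; first by apply: A_mul_comm => //; apply: projA.
by rewrite -mulrA (mulrA f) -C -mulrA (projI Hf) mulrA (projI He).
Qed.

Lemma meet_commuting e f : proj e -> proj f -> e * f = f * e ->
  pmeet A Apos e f = e * f.
Proof.
move=> He Hf C.
have Pef := proj_mul He Hf C.
apply: meet_unique; split => //; split.
  by apply: proj_le => //; rewrite -mulrA -C mulrA (projI He).
split; first by apply: proj_le => //; rewrite -mulrA (projI Hf).
move=> s Hs Hse Hsf; apply: proj_le => //.
have [se _] := le_proj Hs He Hse; have [sf _] := le_proj Hs Hf Hsf.
by rewrite mulrA se sf.
Qed.

Lemma comm_compl (x y : E) : x * y = y * x -> (1 - x) * y = y * (1 - x).
Proof. by move=> C; rewrite mulrBl mulrBr mul1r mulr1 C. Qed.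

Lemma comm_compl' (x y : E) : x * y = y * x -> x * (1 - y) = (1 - y) * x.
Proof. by move=> C; rewrite mulrBl mulrBr mul1r mulr1 C. Qed.

Lemma comm_complE (x y : E) : (1 - x) * y = y * (1 - x) -> x * y = y * x.
Proof. by move/comm_compl; rewrite compl_invol. Qed.

Lemma comm_complE' (x y : E) : x * (1 - y) = (1 - y) * x -> x * y = y * x.
Proof. by move/comm_compl'; rewrite compl_invol. Qed.

Lemma join_commuting e f : proj e -> proj f -> e * f = f * e ->
  pjoin A Apos e f = 1 - (1 - e) * (1 - f).
Proof.
move=> He Hf C; rewrite join_demorgan // meet_commuting //;
  try exact: proj_compl.
by apply: comm_compl; apply: comm_compl'.
Qed.

Definition rp p q := pmeet A Apos (pmeet A Apos p (pjoin A Apos (1 - p) q))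
  (pjoin A Apos (1 - p) (1 - q)).

Lemma rp_formula p q : proj p -> proj q ->
  rp p q = p - pmeet A Apos p (1 - q) - pmeet A Apos p q.
Proof.
move=> Hp Hq.
have Hp' := proj_compl Hp; have Hq' := proj_compl Hq.
rewrite /rp !join_demorgan // ?compl_invol //.
set a := pmeet A Apos p (1 - q); set b := pmeet A Apos p q.
have Ha : proj a by apply: meet_proj.
have Hb : proj b by apply: meet_proj.
have [ap pa] := le_proj Ha Hp (meet_l Hp Hq').
have [aq' q'a] := le_proj Ha Hq' (meet_r Hp Hq').
have [bp pb] := le_proj Hb Hp (meet_l Hp Hq).
have [bq qb] := le_proj Hb Hq (meet_r Hp Hq).
have aq : a * q = 0 by move: aq'; rewrite mulrBr mulr1 => /eqP; rewrite subr_eq addrC -subr_eq subrr => /eqP <-.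
have qa : q * a = 0 by move: q'a; rewrite mulrBl mul1r => /eqP; rewrite subr_eq addrC -subr_eq subrr => /eqP <-.
have ba : b * a = 0 by rewrite -bq -mulrA qa mulr0.
have ab : a * b = 0 by rewrite -qb mulrA aq mul0r.
have m1 : pmeet A Apos p (1 - a) = p - a.
  rewrite meet_commuting //; first by rewrite mulrBr mulr1 pa.
    exact: proj_compl.
  by rewrite mulrBr mulrBl mulr1 mul1r pa ap.
have Hpa : proj (p - a) by rewrite -m1; apply: meet_proj => //; apply: proj_compl.
rewrite m1 meet_commuting //; first by rewrite mulrBr mulr1 mulrBl pb ab subr0.
  exact: proj_compl.
by rewrite !mulrBr !mulrBl !mulr1 !mul1r pb bp ab ba !subr0 addrAC.
Qed.

Lemma rp0 p q : proj p -> proj q -> (rp p q = 0 <-> p * q = q * p).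
Proof.
move=> Hp Hq.
have Hq' := proj_compl Hq.
rewrite rp_formula //.
set a := pmeet A Apos p (1 - q); set b := pmeet A Apos p q.
split.
  have Ha : proj a by apply: meet_proj.
  have Hb : proj b by apply: meet_proj.
  have [aq' q'a] := le_proj Ha Hq' (meet_r Hp Hq').
  have [bq qb] := le_proj Hb Hq (meet_r Hp Hq).
  have aq : a * q = 0 by move: aq'; rewrite mulrBr mulr1 => /eqP; rewrite subr_eq addrC -subr_eq subrr => /eqP <-.
  have qa : q * a = 0 by move: q'a; rewrite mulrBl mul1r => /eqP; rewrite subr_eq addrC -subr_eq subrr => /eqP <-.
  move=> /eqP; rewrite -addrA -opprD subr_eq0 => /eqP ->.
  by rewrite mulrDl mulrDr aq qa bq qb !add0r.
move=> C.
rewrite /a /b !meet_commuting //; last exact: comm_compl'.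
by rewrite mulrBr mulr1 opprB [p + _]addrC subrK subrr.
Qed.

Definition pqt p q := pmeet A Apos (pmeet A Apos (pmeet A Apos
   (pjoin A Apos p q) (pjoin A Apos p (1 - q))) (pjoin A Apos (1 - p) q))
   (pjoin A Apos (1 - p) (1 - q)).

Lemma le_join_mul x e f : proj x -> proj e -> proj f ->
  le x (pjoin A Apos e f) -> x * pjoin A Apos e f = x.
Proof. by move=> Hx He Hf H; case: (le_proj Hx (join_proj He Hf) H). Qed.

Lemma split_q (y z q : E) : y * (z * (1 - q)) + y * (z * q) = y * z.
Proof. by rewrite -mulrDr -mulrDr subrK mulr1. Qed.

Lemma pqt0 p q : proj p -> proj q -> (pqt p q = 0 <-> p * q = q * p).
Proof.
move=> Hp Hq.
have Hp' := proj_compl Hp; have Hq' := proj_compl Hq.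
have J1 := join_proj Hp Hq; have J2 := join_proj Hp Hq'.
have J3 := join_proj Hp' Hq; have J4 := join_proj Hp' Hq'.
have M1 := meet_proj J1 J2; have M2 := meet_proj M1 J3.
split.
  move=> H0; apply/(rp0 Hp Hq).
  have Hr : proj (rp p q) by apply: meet_proj; [apply: meet_proj|].
  have l1 : le (rp p q) p by apply: le_trans (meet_l _ _) (meet_l _ _) => //; apply: meet_proj.
  have l3 : le (rp p q) (pjoin A Apos (1 - p) q).
    by apply: le_trans (meet_l _ _) (meet_r _ _) => //; apply: meet_proj.
  have l4 : le (rp p q) (pjoin A Apos (1 - p) (1 - q)) by apply: meet_r => //; apply: meet_proj.
  have : le (rp p q) (pqt p q).
    apply: meet_glb => //; apply: meet_glb => //; apply: meet_glb => //.
      exact: le_trans l1 (join_l _ _).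
    exact: le_trans l1 (join_l _ _).
  rewrite H0 /sle sub0r => Hn.
  by apply: pos_anti => //; apply: proj_pos.
move=> C.
have Hx : proj (pqt p q) by apply: meet_proj.
set x := pqt p q.
have lx1 : le x (pmeet A Apos (pmeet A Apos (pjoin A Apos p q) (pjoin A Apos p (1 - q)))
   (pjoin A Apos (1 - p) q)) by apply: meet_l.
have lx2 : le x (pmeet A Apos (pjoin A Apos p q) (pjoin A Apos p (1 - q))).
  exact: le_trans lx1 (meet_l _ _).
have x1 : x * pjoin A Apos p q = x by apply: le_join_mul => //; exact: le_trans lx2 (meet_l _ _).
have x2 : x * pjoin A Apos p (1 - q) = x by apply: le_join_mul => //; exact: le_trans lx2 (meet_r _ _).
have x3 : x * pjoin A Apos (1 - p) q = x by apply: le_join_mul => //; exact: le_trans lx1 (meet_r _ _).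
have x4 : x * pjoin A Apos (1 - p) (1 - q) = x by apply: le_join_mul => //; apply: meet_r.
have C2 := comm_compl' C; have C3 := comm_compl C; have C4 := comm_compl' C3.
rewrite !join_commuting // ?compl_invol // in x1 x2 x3 x4.
move: x1 x2 x3 x4 => /mulC0' x1 /mulC0' x2 /mulC0' x3 /mulC0' x4.
rewrite ?compl_invol in x1 x2 x3 x4.
have xp' : x * (1 - p) = 0 by rewrite -(split_q x (1 - p) q) x1 x2 addr0.
have xp : x * p = 0 by rewrite -(split_q x p q) x3 x4 addr0.
by move: xp'; rewrite mulrBr mulr1 xp subr0.
Qed.

End Syn.

Theorem theorem3p3 (R : realType) (E : algType R) (A Apos : set E) :
  synaptic_algebra A Apos ->
  forall p q : E, is_proj A p -> is_proj A q ->
  let meet := pmeet A Apos in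
  let join := pjoin A Apos in
  let pp := pcompl p in
  let qq := pcompl q in
  let r_p  := meet (meet p (join pp q)) (join pp qq) in
  let r_pp := meet (meet pp (join p q)) (join p qq) in
  let r_q  := meet (meet q (join p qq)) (join pp qq) in
  let r_qq := meet (meet qq (join p q)) (join pp q) in
  let pq := meet (meet (meet (join p q) (join p qq)) (join pp q)) (join pp qq) in
  [<-> r_p = 0 \/ r_pp = 0 \/ r_q = 0 \/ r_qq = 0;
       r_p = 0 /\ r_pp = 0 /\ r_q = 0 /\ r_qq = 0;
       commutes p q \/ commutes p qq \/ commutes pp q \/ commutes pp qq;
       commutes p q /\ commutes p qq /\ commutes pp q /\ commutes pp qq;
       pq = 0].
Proof.
move=> HS p q Hp Hq; cbv zeta; rewrite /pcompl /commutes.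
have Hp' := proj_compl HS Hp; have Hq' := proj_compl HS Hq.
have e1 := rp0 HS Hp Hq; rewrite /rp in e1.
have e2 := rp0 HS Hp' Hq; rewrite /rp compl_invol in e2.
have e3 := rp0 HS Hq Hp; rewrite /rp (join_comm HS Hq' Hp) (join_comm HS Hq' Hp') in e3.
have e4 := rp0 HS Hq' Hp; rewrite /rp compl_invol (join_comm HS Hq Hp) (join_comm HS Hq Hp') in e4.
have e5 := pqt0 HS Hp Hq; rewrite /pqt in e5.
have c2 : p * (1 - q) = (1 - q) * p <-> p * q = q * p.
  by split; [apply: comm_complE' | apply: comm_compl'].
have c3 : (1 - p) * q = q * (1 - p) <-> p * q = q * p.
  by split; [apply: comm_complE | apply: comm_compl].
have c4 : (1 - p) * (1 - q) = (1 - q) * (1 - p) <-> p * q = q * p.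
  by split; [move/comm_complE/comm_complE' | move/comm_compl'/comm_compl].
have c5 : q * p = p * q <-> p * q = q * p by split.
have c6 : (1 - q) * p = p * (1 - q) <-> p * q = q * p.
  by split; [move=> H; apply/comm_complE'; rewrite H | move/comm_compl' ->].
rewrite (propext e1) (propext e2) (propext e3) (propext e4) (propext e5).
rewrite (propext c2) (propext c3) (propext c4) (propext c5) (propext c6).
by tfae; tauto.
Qed.
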